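(* For every ensemble $\mathcal{E}=\{\eta_{i},\rho_{i}\}_{i\in\mathbb{N}_{n}}$, $p_{\sf G}(\mathcal{E})=q_{\sf G}(\mathcal{E})$.
   Context: $\mathbb{N}_{n}=\{1,\ldots,n\}$. $\mathcal{H}$ is a finite-dimensional complex Hilbert space, $\mathbb{H}$ the Hermitian operators on it, $\mathbb{H}_{+}$ the positive-semidefinite ones, $\mathbbm{1}$ the identity. An ensemble $\mathcal{E}=\{\eta_{i},\rho_{i}\}_{i\in\mathbb{N}_{n}}$: density operators $\rho_i$ with probabilities $\eta_i>0$, $\sum_i\eta_i=1$; $\rho_0=\sum_i\eta_i\rho_i$. A measurement is $\{M_{?}\}\cup\{M_{i}\}_{i\in\mathbb{N}_{n}}\subseteq\mathbb{H}_+$ with $M_?+\sum_iM_i=\mathbbm{1}$. $\mathcal{C}_{x}(\mathcal{E})$ is the maximum of $\eta_{x}\Tr(\rho_{x}M_{x})/\Tr(\rho_{0}M_{x})$ over measurements with $\Tr(\rho_{0}M_{x})>0$. $\mathbb{M}_{i}(\mathcal{E})=\{E\in\mathbb{H}_{+}\mid\Tr[(\mathcal{C}_{i}(\mathcal{E})\rho_{0}-\eta_{i}\rho_{i})E]=0\}$ and $\mathbb{M}_{i}^{*}(\mathcal{E})=\{E\in\mathbb{H}\mid\Tr(EF)\ge0\ \forall F\in\mathbb{M}_{i}(\mathcal{E})\}$. $\mathbb{M}(\mathcal{E})$ is the set of measurements with $M_i\in\mathbb{M}_i(\mathcal{E})$ for all $i$. $p_{\sf G}(\mathcal{E})=\max_{\mathcal{M}\in\mathbb{M}(\mathcal{E})}\sum_{i}\eta_{i}\Tr(\rho_{i}M_{i})$.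 $\mathbb{H}(\mathcal{E})=\{H\in\mathbb{H}_{+}\mid H-\eta_{i}\rho_{i}\in\mathbb{M}_{i}^{*}(\mathcal{E})\ \forall i\}$ and $q_{\sf G}(\mathcal{E})=\min_{H\in\mathbb{H}(\mathcal{E})}\Tr H$. *)

(* Defs.v *)
(* matrices over C := complex R for an arbitrary R : realType
   (R[i] is a numClosedFieldType since every realType is real closed). *)
From HB Require Import structures.
From mathcomp Require Import all_boot all_order all_algebra.
From mathcomp Require Import classical_sets reals.
From mathcomp Require Import complex.

Set Implicit Arguments.
Unset Strict Implicit.
Unset Printing Implicit Defensive.

Import Order.TTheory GRing.Theory Num.Theory.
Local Open Scope ring_scope.
Local Open Scope classical_set_scope.

Section QuantumDefs.
Variable R : realType.
Local Notation C := (complex.complex R).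

Definition RtoC (x : R) : C := complex.Complex x 0.

Variable d : nat. (* the Hilbert space is C^d *)

Definition adjmx (m p : nat) (A : 'M[C]_(m, p)) : 'M[C]_(p, m) :=
  map_mx Num.conj (A^T).

Definition hermitian (A : 'M[C]_d) : Prop := adjmx A = A.

Definition psd (A : 'M[C]_d) : Prop :=
  hermitian A /\ forall v : 'cV[C]_d, 0 <= (adjmx v *m A *m v) 0 0.

Definition density (rho : 'M[C]_d) : Prop := psd rho /\ \tr rho = 1.

Variable n : nat.

Definition ensemble (eta : 'I_n -> R) (rho : 'I_n -> 'M[C]_d) : Prop :=
  (forall i, 0 < eta i) /\ \sum_(i < n) eta i = 1 /\ (forall i, density (rho i)).

Variables (eta : 'I_n -> R) (rho : 'I_n -> 'M[C]_d).

Definition rho0 : 'M[C]_d := \sum_(i < n) RtoC (eta i) *: rho i.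

(* measurements {M_?} \cup {M_i}_{i in N_n} *)
Definition measurement (Mq : 'M[C]_d) (M : 'I_n -> 'M[C]_d) : Prop :=
  psd Mq /\ (forall i, psd (M i)) /\ Mq + \sum_(i < n) M i = 1%:M.

(* C_x(E): the optimal value of eta_x Tr(rho_x M_x) / Tr(rho_0 M_x)
   over measurements with Tr(rho_0 M_x) > 0 (the paper's maximum). *)
Definition Cx (x : 'I_n) : R :=
  sup [set r : R | exists Mq M, measurement Mq M /\ 0 < \tr (rho0 *m M x) /\
        r = complex.Re (RtoC (eta x) * \tr (rho x *m M x) / \tr (rho0 *m M x))].

Definition Mset (i : 'I_n) : set 'M[C]_d :=
  [set E | psd E /\ \tr ((RtoC (Cx i) *: rho0 - RtoC (eta i) *: rho i) *m E) = 0].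

Definition Mdual (i : 'I_n) : set 'M[C]_d :=
  [set E | hermitian E /\ forall F, Mset i F -> 0 <= \tr (E *m F)].

Definition Mmeas (Mq : 'M[C]_d) (M : 'I_n -> 'M[C]_d) : Prop :=
  measurement Mq M /\ forall i, Mset i (M i).

Definition pG : R :=
  sup [set r : R | exists Mq M, Mmeas Mq M /\
        r = complex.Re (\sum_(i < n) RtoC (eta i) * \tr (rho i *m M i))].

Definition Hset : set 'M[C]_d :=
  [set H | psd H /\ forall i, Mdual i (H - RtoC (eta i) *: rho i)].

Definition qG : R := inf [set r : R | exists H, Hset H /\ r = complex.Re (\tr H)].

End QuantumDefs.

(* Main.v *)
Require Import Defs.
From HB Require Import structures.
From mathcomp Require Import all_boot all_order all_algebra.
From mathcomp Require Import classical_sets reals complex ring lra.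
From mathcomp Require sesquilinear.
From mathcomp Require Import spectral.

Set Implicit Arguments.
Unset Strict Implicit.
Unset Printing Implicit Defensive.
Import Order.TTheory GRing.Theory Num.Theory.
Local Open Scope ring_scope.

Section Basics.
Variable R : realType.
Local Notation C := (complex.complex R).

Lemma RtoCE (x : R) : RtoC x = x%:C%C. Proof. by []. Qed.
Lemma ReRtoC (x : R) : complex.Re (RtoC x) = x. Proof. by []. Qed.
Lemma ReD (x y : C) : complex.Re (x + y) = complex.Re x + complex.Re y.
Proof. by case: x => ? ?; case: y. Qed.
Lemma ReN (x : C) : complex.Re (- x) = - complex.Re x.
Proof. by case: x. Qed.
Lemma ReB (x y : C) : complex.Re (x - y) = complex.Re x - complex.Re y.
Proof. by rewrite ReD ReN. Qed.
Lemma Re0 : complex.Re (0 : C) = 0. Proof. by []. Qed.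
Lemma ReM_RtoC (t : R) (x : C) : complex.Re (RtoC t * x) = t * complex.Re x.
Proof. by case: x => a b /=; rewrite !mul0r subr0. Qed.
Lemma Re_sum (I : Type) (r : seq I) (P : pred I) (F : I -> C) :
  complex.Re (\sum_(i <- r | P i) F i) = \sum_(i <- r | P i) complex.Re (F i).
Proof. exact: (big_morph _ ReD Re0). Qed.
Lemma RtoCD (x y : R) : RtoC (x + y) = RtoC x + RtoC y.
Proof. by rewrite !RtoCE rmorphD. Qed.
Lemma RtoCM (x y : R) : RtoC (x * y) = RtoC x * RtoC y.
Proof. by rewrite !RtoCE rmorphM. Qed.
Lemma RtoCN (x : R) : RtoC (- x) = - RtoC x.
Proof. by rewrite !RtoCE rmorphN. Qed.
Lemma RtoC0 : RtoC 0 = 0 :> C. Proof. by []. Qed.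
Lemma RtoC1 : RtoC 1 = 1 :> C. Proof. by []. Qed.
Lemma RtoCV (x : R) : RtoC (x^-1) = (RtoC x)^-1.
Proof. by rewrite !RtoCE fmorphV. Qed.
Lemma conj_RtoC (x : R) : Num.conj (RtoC x) = RtoC x.
Proof. by apply: conj_Creal; rewrite RtoCE complex_real. Qed.
Lemma RtoC_real (x : R) : RtoC x \is Num.real.
Proof. by rewrite RtoCE complex_real. Qed.
Lemma lecRe (x y : C) : x <= y -> complex.Re x <= complex.Re y.
Proof. by rewrite lecE => /andP []. Qed.
Lemma ge0_Re (z : C) : 0 <= z -> 0 <= complex.Re z.
Proof. by move/lecRe. Qed.
Lemma RtoC_le (x y : R) : (RtoC x <= RtoC y) = (x <= y).
Proof. by rewrite !RtoCE lecR. Qed.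
Lemma real_ge0C (z : C) : z \is Num.real -> 0 <= complex.Re z -> 0 <= z.
Proof. by case: z => a b; rewrite complex_real lecE /= => /eqP -> ->; rewrite eqxx. Qed.
Lemma real_leC (x y : C) : x \is Num.real -> y \is Num.real ->
  complex.Re x <= complex.Re y -> x <= y.
Proof.
move=> xr yr h; rewrite -subr_ge0; apply: real_ge0C; first exact: rpredB.
by rewrite ReB subr_ge0.
Qed.
Lemma RtoC_Re (z : C) : z \is Num.real -> RtoC (complex.Re z) = z.
Proof. by case: z => a b; rewrite complex_real => /eqP ->. Qed.
Lemma Re_natr (k : nat) : complex.Re (k%:R : C) = k%:R.
Proof. by elim: k => // k IH; rewrite -natr1 ReD IH -natr1. Qed.
Lemma Re_conj (z : C) : complex.Re (Num.conj z) = complex.Re z.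
Proof. by case: z. Qed.

End Basics.

Section HahnBanach.
Local Open Scope classical_set_scope.
Variable R : realType.
Variable I : finType.
Definition fsc (t : R) (a : {ffun I -> R}) : {ffun I -> R} := [ffun i => t * a i].
Definition fe (x : I) : {ffun I -> R} := [ffun i => (i == x)%:R].
Definition fsupp (S : {set I}) (a : {ffun I -> R}) := forall i, i \notin S -> a i = 0.
Definition flin (lam : I -> R) (a : {ffun I -> R}) := \sum_i lam i * a i.

Variable p : {ffun I -> R} -> R.
Hypothesis padd : forall a b, p (a + b) <= p a + p b.
Hypothesis phom : forall t a, 0 < t -> p (fsc t a) = t * p a.

Lemma flinD lam a b : flin lam (a + b) = flin lam a + flin lam b.
Proof. by rewrite /flin -big_split; apply: eq_bigr => i _; rewrite ffunE mulrDr. Qed.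
Lemma flinZ lam t a : flin lam (fsc t a) = t * flin lam a.
Proof. by rewrite /flin mulr_sumr; apply: eq_bigr => i _; rewrite ffunE mulrCA. Qed.
Lemma flinN lam a : flin lam (- a) = - flin lam a.
Proof. by rewrite /flin -sumrN; apply: eq_bigr => i _; rewrite ffunE mulrN. Qed.

Lemma hb_step (S : {set I}) (y : I) (lam : I -> R) :
  y \notin S ->
  (forall a, fsupp S a -> flin lam a <= p a) ->
  exists mu, forall a, fsupp (y |: S) a ->
     flin (fun i => if i == y then mu else lam i) a <= p a.
Proof.
move=> yS H.
set Lo := [set r | exists2 a, fsupp S a & r = flin lam a - p (a - fe y)].
have upb : forall a b, fsupp S a -> fsupp S b ->
    flin lam a - p (a - fe y) <= p (b + fe y) - flin lam b.
  move=> a b Sa Sb.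
  rewrite lerBrDr addrAC lerBlDr.
  have Sab : fsupp S (a + b) by move=> i iS; rewrite ffunE Sa ?Sb ?addr0.
  rewrite -flinD; apply: le_trans (H _ Sab) _.
  have -> : a + b = (a - fe y) + (b + fe y) by rewrite addrACA addNr addr0.
  by rewrite addrC; apply: padd.
have S0 : fsupp S 0 by move=> i _; rewrite ffunE.
have Lo0 : Lo !=set0 by exists (flin lam 0 - p (0 - fe y)); exists 0.
have ubLo : forall b, fsupp S b -> ubound Lo (p (b + fe y) - flin lam b).
  by move=> b Sb r [a Sa ->]; exact: upb.
have hasub : has_ubound Lo by exists (p (0 + fe y) - flin lam 0); exact: ubLo.
exists (sup Lo) => a Sa.
set a' := a - fsc (a y) (fe y).
have Sa' : fsupp S a'.
  move=> i iS; rewrite /a' !ffunE; case: (eqVneq i y) => [->|iy].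
    by rewrite mulr1 subrr.
  rewrite mulr0 subr0; apply: Sa.
  by rewrite finset.in_setU1 (negPf iy) iS.
have a'y : a' y = 0 by apply: Sa'.
have -> : a = a' + fsc (a y) (fe y) by rewrite /a' subrK.
have -> : flin (fun i => if i == y then sup Lo else lam i) (a' + fsc (a y) (fe y))
    = flin lam a' + a y * sup Lo.
  rewrite flinD; congr (_ + _).
    apply: eq_bigr => i _; case: (eqVneq i y) => [->|//]; by rewrite a'y !mulr0.
  rewrite /flin (bigD1 y) //= big1 ?addr0.
    by rewrite !ffunE eqxx mulr1 mulrC.
  by move=> i iy; rewrite !ffunE (negPf iy) mulr0 mulr0.
set t := a y.
case: (ltgtP t 0) => [tlt0|tgt0|->].
-
  set s := - t.
  have s0 : 0 < s by rewrite /s oppr_gt0.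
  have Sas : fsupp S (fsc s^-1 a') by move=> i iS; rewrite ffunE Sa' // mulr0.
  have := ub_le_sup hasub (ex_intro2 _ _ (fsc s^-1 a') Sas erefl).
  rewrite flinZ lerBlDr => h.
  have : s * (s^-1 * flin lam a') <= s * (sup Lo + p (fsc s^-1 a' - fe y)).
    by rewrite ler_pM2l.
  rewrite mulrA mulfV ?gt_eqF // mul1r mulrDr -phom //.
  have -> : fsc s (fsc s^-1 a' - fe y) = a' + fsc t (fe y).
    apply/ffunP => i; rewrite !ffunE /s mulrDr mulrA mulfV ?gt_eqF // mul1r.
    by rewrite mulrNN.
  by move=> h2; rewrite /s in h2; lra.
-
  have Sas : fsupp S (fsc t^-1 a') by move=> i iS; rewrite ffunE Sa' // mulr0.
  have := ge_sup Lo0 (ubLo _ Sas).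
  rewrite flinZ lerBrDl => h.
  have : t * (t^-1 * flin lam a' + sup Lo) <= t * p (fsc t^-1 a' + fe y).
    by rewrite ler_pM2l.
  rewrite -phom // mulrDr mulrA mulfV ?gt_eqF // mul1r.
  have -> : fsc t (fsc t^-1 a' + fe y) = a' + fsc t (fe y).
    by apply/ffunP => i; rewrite !ffunE mulrDr mulrA mulfV ?gt_eqF // mul1r.
  by rewrite mulrC.
- have -> : fsc 0 (fe y) = 0 by apply/ffunP => i; rewrite !ffunE mul0r.
  by rewrite addr0 mul0r addr0; apply: H.
Qed.

Lemma hahn_banach (x0 : I) (c : R) :
  (forall t, t * c <= p (fsc t (fe x0))) ->
  exists lam : I -> R, lam x0 = c /\ forall a, flin lam a <= p a.
Proof.
move=> Hc.
suff : forall k (S : {set I}), #|S| = k.+1 -> x0 \in S ->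
   exists lam : I -> R, lam x0 = c /\ forall a, fsupp S a -> flin lam a <= p a.
  move=> /(_ #|I|.-1 [set: I]%SET); rewrite cardsT prednK; last first.
    by apply/card_gt0P; exists x0.
  move=> /(_ erefl (finset.in_setT x0)) [lam [H1 H2]].
  by exists lam; split => // a; apply: H2 => i; rewrite finset.in_setT.
elim=> [|k IH] S cS xS.
  have SE : S = [set x0]%SET.
    by apply/eqP; rewrite eq_sym eqEcard finset.sub1set xS cards1 cS.
  exists (fun i => if i == x0 then c else 0); split; first by rewrite eqxx.
  move=> a Sa.
  have -> : a = fsc (a x0) (fe x0).
    apply/ffunP => i; rewrite !ffunE; case: (eqVneq i x0) => [->|ix].
      by rewrite mulr1.
    by rewrite mulr0; apply: Sa; rewrite SE finset.in_set1 ix.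
  rewrite /flin (bigD1 x0) //= big1 ?addr0.
    by rewrite eqxx !ffunE eqxx mulr1 mulrC.
  by move=> i ix; rewrite (negPf ix) mul0r.
have [y yS yx] : exists2 y, y \in S & y != x0.
  have : (1 < #|S|)%N by rewrite cS.
  rewrite (cardsD1 x0) xS add1n ltnS => /card_gt0P [y]; rewrite !inE => /andP [yx yS].
  by exists y.
have cS' : #|S :\ y| = k.+1 by move: cS; rewrite (cardsD1 y) yS add1n => -[].
have xS' : x0 \in S :\ y by rewrite !inE eq_sym yx.
have [lam [lx H]] := IH _ cS' xS'.
have yS' : y \notin S :\ y by rewrite !inE eqxx.
have [mu Hmu] := @hb_step (S :\ y) y lam yS' H.
exists (fun i => if i == y then mu else lam i); split.
  by rewrite eq_sym (negPf yx).
move=> a Sa; apply: Hmu => i; rewrite finset.setD1K //; exact: Sa.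
Qed.

End HahnBanach.

Section Mx.
Variable R : realType.
Local Notation C := (complex.complex R).

Lemma adjmxE m p (A : 'M[C]_(m, p)) i j : adjmx A i j = Num.conj (A j i).
Proof. by rewrite !mxE. Qed.
Lemma adjmxK m p (A : 'M[C]_(m, p)) : adjmx (adjmx A) = A.
Proof. by apply/matrixP => i j; rewrite !adjmxE conjCK. Qed.
Lemma adjmx_mul m p q (A : 'M[C]_(m, p)) (B : 'M[C]_(p, q)) :
  adjmx (A *m B) = adjmx B *m adjmx A.
Proof. by rewrite /adjmx trmx_mul map_mxM. Qed.
Lemma adjmxD m p (A B : 'M[C]_(m, p)) : adjmx (A + B) = adjmx A + adjmx B.
Proof. by apply/matrixP => i j; rewrite !mxE rmorphD. Qed.
Lemma adjmxN m p (A : 'M[C]_(m, p)) : adjmx (- A) = - adjmx A.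
Proof. by apply/matrixP => i j; rewrite !mxE rmorphN. Qed.
Lemma adjmxB m p (A B : 'M[C]_(m, p)) : adjmx (A - B) = adjmx A - adjmx B.
Proof. by rewrite adjmxD adjmxN. Qed.
Lemma adjmxZ m p (a : C) (A : 'M[C]_(m, p)) : adjmx (a *: A) = Num.conj a *: adjmx A.
Proof. by apply/matrixP => i j; rewrite !mxE rmorphM. Qed.
Lemma adjmx0 m p : adjmx (0 : 'M[C]_(m, p)) = 0.
Proof. by apply/matrixP => i j; rewrite !mxE rmorph0. Qed.
Lemma adjmx1 m : adjmx (1%:M : 'M[C]_m) = 1%:M.
Proof. by apply/matrixP => i j; rewrite !mxE eq_sym; case: (i == j); rewrite ?rmorph1 ?rmorph0. Qed.
Lemma adjmx_sum m p (I : finType) (F : I -> 'M[C]_(m, p)) :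
  adjmx (\sum_i F i) = \sum_i adjmx (F i).
Proof. by apply: (big_morph _ (@adjmxD m p) (@adjmx0 m p)). Qed.
Lemma tr_adjmx m (A : 'M[C]_m) : \tr (adjmx A) = Num.conj (\tr A).
Proof. by rewrite /mxtrace rmorph_sum; apply: eq_bigr => i _; rewrite adjmxE. Qed.

Variable d : nat.
Local Notation M := 'M[C]_d.
Implicit Types (A B : M).

Definition mv (A : M) (v : 'cV[C]_d) : C := (adjmx v *m A *m v) 0 0.

Lemma mvD A B v : mv (A + B) v = mv A v + mv B v.
Proof. by rewrite /mv mulmxDr mulmxDl mxE. Qed.
Lemma mvN A v : mv (- A) v = - mv A v.
Proof. by rewrite /mv mulmxN mulNmx mxE. Qed.
Lemma mvB A B v : mv (A - B) v = mv A v - mv B v.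
Proof. by rewrite mvD mvN. Qed.
Lemma mvZ a A v : mv (a *: A) v = a * mv A v.
Proof. by rewrite /mv -scalemxAr -scalemxAl mxE. Qed.
Lemma mv0 v : mv 0 v = 0.
Proof. by rewrite /mv mulmx0 mul0mx mxE. Qed.
Lemma mv_sum (I : finType) (F : I -> M) v : mv (\sum_i F i) v = \sum_i mv (F i) v.
Proof. by apply: (big_morph (mv^~ v)) => [A B|]; rewrite ?mvD ?mv0. Qed.
Lemma conj_mv A v : Num.conj (mv A v) = mv (adjmx A) v.
Proof.
have -> : Num.conj (mv A v) = adjmx (adjmx v *m A *m v) 0 0 by rewrite adjmxE.
by rewrite !adjmx_mul adjmxK mulmxA.
Qed.
Lemma herm_mv_real A v : Defs.hermitian A -> mv A v \is Num.real.
Proof. by move=> hA; apply/CrealP; rewrite conj_mv hA. Qed.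
Lemma mvE A v : mv A v = \sum_i \sum_j Num.conj (v i 0) * A i j * v j 0.
Proof.
rewrite /mv mxE (eq_bigr (fun j => \sum_i Num.conj (v i 0) * A i j * v j 0)).
  exact: exchange_big.
move=> j _; rewrite mxE mulr_suml; apply: eq_bigr => i _; by rewrite adjmxE.
Qed.
Lemma mv1E v : mv 1%:M v = \sum_i Num.conj (v i 0) * v i 0.
Proof.
rewrite mvE; apply: eq_bigr => i _; rewrite (bigD1 i) //= big1 ?addr0.
  by rewrite mxE eqxx mulr1.
by move=> j ji; rewrite mxE eq_sym (negPf ji) mulr0 mul0r.
Qed.
Lemma mv1_ge0 v : 0 <= mv 1%:M v.
Proof. by rewrite mv1E; apply: sumr_ge0 => i _; rewrite mulrC mul_conjC_ge0. Qed.

Lemma hermitianD A B : Defs.hermitian A -> Defs.hermitian B -> Defs.hermitian (A + B).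
Proof. by rewrite /Defs.hermitian adjmxD => -> ->. Qed.
Lemma hermitianN A : Defs.hermitian A -> Defs.hermitian (- A).
Proof. by rewrite /Defs.hermitian adjmxN => ->. Qed.
Lemma hermitianB A B : Defs.hermitian A -> Defs.hermitian B -> Defs.hermitian (A - B).
Proof. by move=> hA hB; apply: hermitianD => //; apply: hermitianN. Qed.
Lemma hermitianZ (t : R) A : Defs.hermitian A -> Defs.hermitian (RtoC t *: A).
Proof. by rewrite /Defs.hermitian adjmxZ conj_RtoC => ->. Qed.
Lemma hermitian0 : Defs.hermitian (0 : M). Proof. exact: adjmx0. Qed.
Lemma hermitian1 : Defs.hermitian (1%:M : M). Proof. exact: adjmx1. Qed.
Lemma hermitian_sum (I : finType) (F : I -> M) :
  (forall i, Defs.hermitian (F i)) -> Defs.hermitian (\sum_i F i).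
Proof. by move=> h; rewrite /Defs.hermitian adjmx_sum; apply: eq_bigr => i _; apply: h. Qed.

Lemma psd_herm A : psd A -> Defs.hermitian A. Proof. by case. Qed.
Lemma psd0 : psd (0 : M).
Proof. by split; [exact: hermitian0 | move=> v; rewrite -/(mv 0 v) mv0]. Qed.
Lemma psd1 : psd (1%:M : M).
Proof. by split; [exact: hermitian1 | move=> v; exact: mv1_ge0]. Qed.
Lemma psdD A B : psd A -> psd B -> psd (A + B).
Proof.
move=> [hA pA] [hB pB]; split; first exact: hermitianD.
by move=> v; rewrite -/(mv _ v) mvD addr_ge0 //; [apply: pA | apply: pB].
Qed.
Lemma psdZ (t : R) A : 0 <= t -> psd A -> psd (RtoC t *: A).
Proof.
move=> t0 [hA pA]; split; first exact: hermitianZ.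
move=> v; rewrite -/(mv _ v) mvZ mulr_ge0 //; last exact: pA.
by rewrite RtoCE lecR.
Qed.
Lemma psd_sum (I : finType) (F : I -> M) : (forall i, psd (F i)) -> psd (\sum_i F i).
Proof.
move=> h; apply: (big_ind (fun A : M => psd A)); [exact: psd0 | exact: psdD | by []].
Qed.
Lemma psd_mv A v : psd A -> 0 <= mv A v. Proof. by case=> _; apply. Qed.

Lemma trB A B : \tr (A - B) = \tr A - \tr B.
Proof. exact: (raddfB (@mxtrace _ d)). Qed.
Lemma tr_sum (I : finType) (F : I -> M) : \tr (\sum_i F i) = \sum_i \tr (F i).
Proof. exact: (raddf_sum (@mxtrace _ d)). Qed.
Lemma tr_herm_real A B : Defs.hermitian A -> Defs.hermitian B -> \tr (A *m B) \is Num.real.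
Proof.
move=> hA hB; apply/CrealP.
by rewrite -tr_adjmx adjmx_mul hA hB mxtrace_mulC.
Qed.
Lemma Re_tr_adj A B : complex.Re (\tr (adjmx A *m B)) = complex.Re (\tr (A *m adjmx B)).
Proof.
rewrite -[in RHS](adjmxK A) -adjmx_mul tr_adjmx Re_conj.
by rewrite mxtrace_mulC.
Qed.

End Mx.
Section Spec.
Local Open Scope sesquilinear_scope.
Variable R : realType.
Local Notation C := (complex.complex R).
Variable d : nat.
Local Notation M := 'M[C]_d.
Implicit Types (A B : M).

Lemma adj_tstar m p (A : 'M[C]_(m, p)) : A ^t* = adjmx A.
Proof. by []. Qed.

Lemma mv_row (P B : M) k : (P *m B *m adjmx P) k k = mv B (adjmx (row k P)).
Proof.
rewrite /mv adjmxK !mxE; apply: eq_bigr => j _.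
by rewrite !mxE; congr (_ * _); apply: eq_bigr => i _; rewrite !mxE.
Qed.

Lemma psd_decomp A : psd A -> exists (u : 'I_d -> 'cV[C]_d) (D : 'I_d -> C),
  (forall k, 0 <= D k) /\ forall B, \tr (B *m A) = \sum_k D k * mv B (u k).
Proof.
move=> pA; have hA := psd_herm pA.
have nA : A \is normalmx by apply/normalmxP; rewrite adj_tstar hA.
have /orthomx_spectralP eA := nA.
set P := spectralmx A in eA; set sp := spectral_diag A in eA.
have Pu : P \is unitarymx := spectral_unitarymx A.
have PPt : P *m adjmx P = 1%:M by apply/unitarymxP.
rewrite invmx_unitary // adj_tstar in eA.
exists (fun k => adjmx (row k P)), (fun k => sp 0 k); split.
  move=> k; have -> : sp 0 k = (P *m A *m adjmx P) k k.
    rewrite [in RHS]eA !mulmxA PPt mul1mx -mulmxA PPt mulmx1 mxE eqxx.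
    by rewrite mulr1n.
  by rewrite mv_row; apply: psd_mv.
move=> B; rewrite {1}eA !mulmxA mxtrace_mulC !mulmxA.
rewrite /mxtrace; apply: eq_bigr => k _.
by rewrite mul_mx_diag [in LHS]mxE mv_row mulrC.
Qed.

Lemma tr_psd_ge0 A B : psd A -> psd B -> 0 <= \tr (B *m A).
Proof.
move=> pA pB; have [u [D [D0 ->]]] := psd_decomp pA.
by apply: sumr_ge0 => k _; apply: mulr_ge0 => //; apply: psd_mv.
Qed.

Lemma tr_psd_le A Y (c : C) : psd A -> (forall v, mv Y v <= c * mv 1%:M v) ->
  \tr (Y *m A) <= c * \tr A.
Proof.
move=> pA hY; have [u [D [D0 E]]] := psd_decomp pA.
rewrite E -(mul1mx A) E mulr_sumr; apply: ler_sum => k _.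
by rewrite mulrCA; apply: ler_wpM2l.
Qed.

Lemma tr_ge0 A : psd A -> 0 <= \tr A.
Proof. by move=> pA; have := tr_psd_ge0 pA (@psd1 _ d); rewrite mul1mx. Qed.

End Spec.
Section Crude.
Variable R : realType.
Local Notation C := (complex.complex R).
Variable d : nat.
Local Notation M := 'M[C]_d.
Implicit Types (A B Y : M).

Lemma mv1E_norm (v : 'cV[C]_d) : mv 1%:M v = \sum_i `|v i 0| ^+ 2.
Proof. by rewrite mv1E; apply: eq_bigr => i _; rewrite normCK mulrC. Qed.

Lemma norm_le_mv1 (v : 'cV[C]_d) i j : `|v i 0| * `|v j 0| <= mv 1%:M v.
Proof.
have key : forall k, `|v k 0| ^+ 2 <= mv 1%:M v.
  move=> k; rewrite mv1E_norm (bigD1 k) //= lerDl.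
  by apply: sumr_ge0 => l _; apply: exprn_ge0.
have /orP[h|h] := real_leVge (normr_real (v i 0)) (normr_real (v j 0)).
  by apply: le_trans (key j); rewrite expr2 ler_wpM2r.
by apply: le_trans (key i); rewrite expr2 ler_wpM2l.
Qed.

Lemma crude_bound Y : Defs.hermitian Y ->
  exists c : R, 0 <= c /\ forall v, mv Y v <= RtoC c * mv 1%:M v.
Proof.
move=> hY; set c' := \sum_i \sum_j `|Y i j|.
have c'0 : 0 <= c' by apply: sumr_ge0 => i _; apply: sumr_ge0.
have c'r : c' \is Num.real by apply: ger0_real.
exists (complex.Re c'); split; first by rewrite -Re0; apply: lecRe.
move=> v; rewrite RtoC_Re //.
apply: le_trans (real_ler_norm (herm_mv_real v hY)) _.
rewrite mvE /c' mulr_suml.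
apply: le_trans (ler_norm_sum _ _ _) _; apply: ler_sum => i _.
rewrite mulr_suml.
apply: le_trans (ler_norm_sum _ _ _) _; apply: ler_sum => j _.
rewrite !normrM norm_conjC -mulrA [`|Y i j| * _]mulrC mulrA.
by rewrite mulrC; apply: ler_wpM2l => //; apply: norm_le_mv1.
Qed.

End Crude.
Lemma big_optionS (V : nmodType) (T : finType) (F : option T -> V) :
  \sum_o F o = F None + \sum_x F (Some x).
Proof.
have -> : index_enum (option T) = None :: map Some (index_enum T).
  by rewrite /index_enum !unlock /= /option_enum; rewrite !unlock.
by rewrite big_cons big_map.
Qed.
Lemma big_pairS (V : nmodType) (T1 T2 : finType) (F : T1 * T2 -> V) :
  \sum_p F p = \sum_i \sum_j F (i, j).
Proof. by rewrite pair_bigA; apply: eq_bigr => -[]. Qed.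

Section Main.
Variable R : realType.
Local Notation C := (complex.complex R).
Variables d n : nat.
Local Notation M := 'M[C]_d.
Variable eta : 'I_n -> R.
Variable rho : 'I_n -> M.
Hypothesis Hens : ensemble eta rho.

Local Notation cc i := (RtoC (eta i) *: rho i).
Local Notation Ms := (Mset eta rho).

Lemma herm_rho i : Defs.hermitian (rho i).
Proof. by case: Hens => _ [_ /(_ i) [[]]]. Qed.
Lemma psd_rho i : psd (rho i).
Proof. by case: Hens => _ [_ /(_ i) []]. Qed.
Lemma herm_cc i : Defs.hermitian (cc i).
Proof. exact/hermitianZ/herm_rho. Qed.
Lemma psd_cc i : psd (cc i).
Proof. by apply: psdZ; [case: Hens => /(_ i) /ltW | apply: psd_rho]. Qed.

Lemma d_gt0 : (0 < d)%N.
Proof.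
case: Hens => _ [sum1 dens].
case: n eta rho sum1 dens => [|n'] eta' rho' sum1 dens.
  by move: sum1; rewrite big_ord0 => /eqP; rewrite eq_sym oner_eq0.
have [_ tr1] := dens ord0.
case: d rho' tr1 {dens} => // rho' tr1.
by move: tr1; rewrite /mxtrace big_ord0 => /eqP; rewrite eq_sym oner_eq0.
Qed.

Lemma Ms0 i : Ms i 0.
Proof. by split; [exact: psd0 | rewrite mulmx0 mxtrace0]. Qed.
Lemma MsD i E F : Ms i E -> Ms i F -> Ms i (E + F).
Proof.
move=> [pE tE] [pF tF]; split; first exact: psdD.
by rewrite mulmxDr mxtraceD tE tF addr0.
Qed.
Lemma MsZ i (t : R) E : 0 <= t -> Ms i E -> Ms i (RtoC t *: E).
Proof.
move=> t0 [pE tE]; split; first exact: psdZ.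
by rewrite -scalemxAr mxtraceZ tE mulr0.
Qed.
Lemma Ms_psd i E : Ms i E -> psd E. Proof. by case. Qed.

Lemma c0_bound : exists c0 : R, 0 <= c0 /\
  forall i (E : M), psd E -> \tr (cc i *m E) <= RtoC c0 * \tr E.
Proof.
have hS : Defs.hermitian (\sum_i cc i) by apply: hermitian_sum => i; apply: herm_cc.
have [c [c0 hc]] := crude_bound hS.
exists c; split => // i E pE; apply: tr_psd_le => // v.
apply: le_trans (hc v); rewrite mv_sum (bigD1 i) //= lerDl.
by apply: sumr_ge0 => j _; apply: psd_mv; apply: psd_cc.
Qed.


Variable c0 : R.
Hypothesis c0_ge0 : 0 <= c0.
Hypothesis c0_bd : forall i (E : M), psd E -> \tr (cc i *m E) <= RtoC c0 * \tr E.

Definition val (Mf : 'I_n -> M) : C := \sum_i \tr (cc i *m Mf i).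
Lemma valE (Mf : 'I_n -> M) :
  \sum_i RtoC (eta i) * \tr (rho i *m Mf i) = val Mf.
Proof. by apply: eq_bigr => i _; rewrite -scalemxAl mxtraceZ. Qed.

Lemma val_le (Mf : 'I_n -> M) : (forall i, psd (Mf i)) ->
  complex.Re (val Mf) <= c0 * complex.Re (\tr (\sum_i Mf i)).
Proof.
move=> pM; rewrite -ReM_RtoC; apply: lecRe.
rewrite tr_sum mulr_sumr; apply: ler_sum => i _; exact: c0_bd.
Qed.

Definition PS := [set r : R | exists Mq Mf, Mmeas eta rho Mq Mf /\
        r = complex.Re (\sum_(i < n) RtoC (eta i) * \tr (rho i *m Mf i))]%classic.
Lemma pGE : pG eta rho = sup PS. Proof. by []. Qed.

Lemma PS_ub r : PS r -> r <= c0 * d%:R.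
Proof.
move=> [Mq [Mf [[[pq [pM sum1]] _] ->]]].
rewrite valE; apply: le_trans (val_le pM) _; apply: ler_wpM2l => //.
have -> : \sum_i Mf i = 1%:M - Mq by rewrite -sum1 [Mq + _]addrC addrK.
rewrite trB mxtrace1 ReB.
have : 0 <= complex.Re (\tr Mq) by apply/ge0_Re/tr_ge0.
rewrite Re_natr.
lra.
Qed.

Lemma PS0 : PS 0.
Proof.
exists 1%:M, (fun _ => 0); split; last first.
  by rewrite valE /val big1 // => i _; rewrite mulmx0 mxtrace0.
split; last by move=> i; apply: Ms0.
split; first exact: psd1.
split; first by move=> i; exact: psd0.
by rewrite big1 ?addr0.
Qed.
Lemma PS_ne : (PS !=set0)%classic. Proof. by exists 0; apply: PS0. Qed.
Lemma PS_hasub : has_ubound PS.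
Proof. by exists (c0 * d%:R) => r; apply: PS_ub. Qed.
Lemma pG_ub r : PS r -> r <= pG eta rho.
Proof. by move=> h; rewrite pGE; apply: ub_le_sup PS_hasub _ h. Qed.
Lemma pG_ge0 : 0 <= pG eta rho. Proof. exact: pG_ub PS0. Qed.
Lemma pG_le b : (forall r, PS r -> r <= b) -> pG eta rho <= b.
Proof. by move=> h; rewrite pGE; apply: ge_sup PS_ne _. Qed.

Lemma weak_duality H r : Hset eta rho H -> PS r -> r <= complex.Re (\tr H).
Proof.
move=> [pH hD] [Mq [Mf [[[pq [pM sum1]] MsM] ->]]].
rewrite valE; apply: lecRe.
have -> : \tr H = \tr (H *m (\sum_i Mf i)) + \tr (H *m Mq).
  by rewrite -mxtraceD -mulmxDr addrC sum1 mulmx1.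
rewrite -[val Mf]addr0; apply: lerD; last exact: tr_psd_ge0.
rewrite mulmx_sumr tr_sum; apply: ler_sum => i _.
have [_ h] := hD i; have := h _ (MsM i).
by rewrite mulmxBl trB subr_ge0.
Qed.

Definition Kc := c0 * d%:R + pG eta rho.
Lemma Kc_ge_pG : pG eta rho <= Kc.
Proof. by rewrite /Kc lerDr mulr_ge0 // ler0n. Qed.

Fact herm_key : unit. Proof. by []. Qed.
Definition herm (X : M) : M := locked_with herm_key (RtoC (2^-1) *: (X + adjmx X)).
Lemma hermE X : herm X = RtoC (2^-1) *: (X + adjmx X).
Proof. by rewrite /herm unlock. Qed.
Lemma herm_herm X : Defs.hermitian (herm X).
Proof. by rewrite /Defs.hermitian hermE adjmxZ conj_RtoC adjmxD adjmxK addrC. Qed.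
Lemma hermD X Y : herm (X + Y) = herm X + herm Y.
Proof. by rewrite !hermE adjmxD -scalerDr addrACA. Qed.
Lemma hermZ (t : R) X : herm (RtoC t *: X) = RtoC t *: herm X.
Proof. by rewrite !hermE adjmxZ conj_RtoC -scalerDr !scalerA mulrC. Qed.
Lemma hermN X : herm (- X) = - herm X.
Proof. by rewrite !hermE adjmxN -opprD scalerN. Qed.
Lemma herm_id X : Defs.hermitian X -> herm X = X.
Proof.
move=> hX; rewrite hermE hX -mulr2n -scaler_nat scalerA.
have -> : RtoC (2^-1) * 2%:R = 1 :> C.
  rewrite RtoCV RtoCE -(rmorph_nat (real_complex R)) mulVf //.
  by rewrite rmorph_nat pnatr_eq0.
by rewrite scale1r.
Qed.

Lemma Re_tr_scal1 (t : R) : complex.Re (\tr (RtoC t *: (1%:M : M))) = t * d%:R.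
Proof. by rewrite mxtraceZ mxtrace1 ReM_RtoC Re_natr. Qed.

Definition SS (X : M) := [set r : R | exists (Mf : 'I_n -> M) (t : R),
   (forall i, Ms i (Mf i)) /\ 0 <= t /\
   psd (herm X + RtoC t *: 1%:M - \sum_i Mf i) /\
   r = complex.Re (val Mf) - Kc * t]%classic.
Definition phi (X : M) := sup (SS X).

Lemma val0 : val (fun _ => 0) = 0.
Proof. by rewrite /val big1 // => i _; rewrite mulmx0 mxtrace0. Qed.

Lemma SS_ne X : (SS X !=set0)%classic.
Proof.
have [c [c_ge0 hc]] := crude_bound (hermitianN (herm_herm X)).
exists (- (Kc * c)), (fun _ => 0), c; split; first by move=> i; apply: Ms0.
split => //; split; last by rewrite val0 Re0 sub0r.
rewrite big1 // subr0; split.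
  by apply: hermitianD; [apply: herm_herm | apply/hermitianZ/hermitian1].
move=> v; rewrite -/(mv _ v) mvD mvZ.
have := hc v; rewrite mvN -subr_ge0 opprK addrC.
done.
Qed.

Lemma SS_ub X r : SS X r -> r <= c0 * complex.Re (\tr (herm X)).
Proof.
move=> [Mf [t [MsM [t0 [pS ->]]]]].
have pM : forall i, psd (Mf i) by move=> i; apply: Ms_psd (MsM i).
have h1 := val_le pM.
have := ge0_Re (tr_ge0 pS).
rewrite trB.
rewrite mxtraceD.
rewrite ReB.
rewrite ReD.
rewrite Re_tr_scal1 => h2.
have h3 : c0 * complex.Re (\tr (\sum_i Mf i)) <=
          c0 * (complex.Re (\tr (herm X)) + t * d%:R).
  by apply: ler_wpM2l => //; lra.
have h4 : 0 <= pG eta rho * t by apply: mulr_ge0 => //; apply: pG_ge0.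
rewrite /Kc; lra.
Qed.

Lemma SS_hasub X : has_ubound (SS X).
Proof. by exists (c0 * complex.Re (\tr (herm X))) => r; apply: SS_ub. Qed.
Lemma phi_ub X r : SS X r -> r <= phi X.
Proof. by move=> h; apply: ub_le_sup (SS_hasub X) _ h. Qed.
Lemma phi_le X b : (forall r, SS X r -> r <= b) -> phi X <= b.
Proof. by move=> h; apply: ge_sup (SS_ne X) _. Qed.

Lemma valD (Mf Mf' : 'I_n -> M) : val (fun i => Mf i + Mf' i) = val Mf + val Mf'.
Proof. by rewrite /val -big_split; apply: eq_bigr => i _; rewrite mulmxDr mxtraceD. Qed.
Lemma valZ (t : R) (Mf : 'I_n -> M) : val (fun i => RtoC t *: Mf i) = RtoC t * val Mf.
Proof. by rewrite /val mulr_sumr; apply: eq_bigr => i _; rewrite -scalemxAr mxtraceZ. Qed.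

Lemma SS_add X Y r s : SS X r -> SS Y s -> SS (X + Y) (r + s).
Proof.
move=> [Mf [t [MsM [t0 [pS ->]]]]] [Mf' [t' [MsM' [t0' [pS' ->]]]]].
exists (fun i => Mf i + Mf' i), (t + t'); split; first by move=> i; apply: MsD.
split; first exact: addr_ge0.
split.
  have -> : herm (X + Y) + RtoC (t + t') *: 1%:M - \sum_i (Mf i + Mf' i) =
     (herm X + RtoC t *: 1%:M - \sum_i Mf i) + (herm Y + RtoC t' *: 1%:M - \sum_i Mf' i).
    by rewrite hermD RtoCD scalerDl big_split /= opprD (addrACA (herm X) (herm Y)) [LHS]addrACA.
  exact: psdD.
by rewrite valD ReD mulrDr opprD addrACA.
Qed.

Lemma phi_superadd X Y : phi X + phi Y <= phi (X + Y).
Proof.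
have step1 : forall s, SS Y s -> phi X <= phi (X + Y) - s.
  move=> s hs; apply: (@phi_le X) => r hr.
  have := phi_ub (SS_add hr hs).
  move: (phi (X + Y)) => a; lra.
have : phi Y <= phi (X + Y) - phi X.
  apply: (@phi_le Y) => s hs.
  have := step1 s hs; clear step1.
  move: (phi (X + Y)) (phi X) => a b; lra.
move: (phi (X + Y)) (phi X) (phi Y) => a b c; lra.
Qed.

Lemma SS_scale X r (t : R) : 0 < t -> SS X r -> SS (RtoC t *: X) (t * r).
Proof.
move=> tpos [Mf [u [MsM [u0 [pS ->]]]]].
exists (fun i => RtoC t *: Mf i), (t * u); split.
  by move=> i; apply: MsZ => //; apply: ltW.
split; first by apply: mulr_ge0 => //; apply: ltW.
split.
  have -> : herm (RtoC t *: X) + RtoC (t * u) *: 1%:M - \sum_i RtoC t *: Mf i =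
      RtoC t *: (herm X + RtoC u *: 1%:M - \sum_i Mf i).
    by rewrite hermZ scalerBr scalerDr scaler_sumr scalerA -RtoCM.
  by apply: psdZ => //; apply: ltW.
rewrite valZ ReM_RtoC; move: (complex.Re (val Mf)) Kc => a k; ring.
Qed.

Lemma phi_scale X (t : R) : 0 < t -> t * phi X <= phi (RtoC t *: X).
Proof.
move=> tpos.
have : phi X <= t^-1 * phi (RtoC t *: X).
  apply: phi_le => r hr.
  have h := phi_ub (SS_scale tpos hr).
  have -> : r = t^-1 * (t * r) by rewrite mulrA mulVf ?gt_eqF // mul1r.
  by apply: ler_wpM2l => //; rewrite invr_ge0 ltW.
move=> h; have := ler_wpM2l (ltW tpos) h.
by rewrite mulrA mulfV ?gt_eqF // mul1r.
Qed.

Lemma phi_hom X (t : R) : 0 < t -> phi (RtoC t *: X) = t * phi X.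
Proof.
move=> tpos; apply/eqP; rewrite eq_le phi_scale // andbT.
have tV : 0 < t^-1 by rewrite invr_gt0.
have := phi_scale (RtoC t *: X) tV.
rewrite scalerA -RtoCM mulVf ?gt_eqF // RtoC1 scale1r => h.
have := ler_wpM2l (ltW tpos) h.
by rewrite mulrA mulfV ?gt_eqF // mul1r.
Qed.

Lemma phi_psd X : psd X -> 0 <= phi X.
Proof.
move=> pX; apply: phi_ub; exists (fun _ => 0), 0; split; first by move=> i; apply: Ms0.
split => //; split; last by rewrite val0 Re0 mulr0 subr0.
by rewrite big1 // subr0 RtoC0 scale0r addr0 herm_id //; apply: psd_herm.
Qed.

Lemma phi_single i F : Ms i F -> complex.Re (\tr (cc i *m F)) <= phi F.
Proof.
move=> MsF; apply: phi_ub.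
have sumF : \sum_j (if j == i then F else 0) = F.
  by rewrite (bigD1 i) //= eqxx big1 ?addr0 // => j /negPf ->.
exists (fun j => if j == i then F else 0), 0; split.
  move=> j; case: eqP => [->|_]; [exact: MsF | exact: Ms0].
split => //; split.
  rewrite sumF RtoC0 scale0r addr0 herm_id ?subrr; first exact: psd0.
  exact/psd_herm/(Ms_psd MsF).
rewrite mulr0 subr0 /val (bigD1 i) //= eqxx big1 ?addr0 //.
by move=> j /negPf ->; rewrite mulmx0 mxtrace0.
Qed.

Lemma herm_scal1 (s : R) : herm (RtoC s *: (1%:M : M)) = RtoC s *: 1%:M.
Proof. by rewrite herm_id //; apply/hermitianZ/hermitian1. Qed.

Lemma psd_trsum_le (u : R) (Mf : 'I_n -> M) :
  psd (RtoC u *: 1%:M - \sum_i Mf i) ->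
  complex.Re (\tr (\sum_i Mf i)) <= u * d%:R.
Proof.
move=> pS; have := ge0_Re (tr_ge0 pS).
by rewrite trB ReB Re_tr_scal1 subr_ge0.
Qed.

Lemma phi_base_pos s : 0 <= s -> phi (RtoC s *: 1%:M) <= s * pG eta rho.
Proof.
move=> s0; apply: phi_le => r [Mf [t [MsM [t0 [pS ->]]]]].
rewrite herm_scal1 -scalerDl -RtoCD in pS.
have pM : forall i, psd (Mf i) by move=> i; apply: Ms_psd (MsM i).
have h1 := val_le pM; have h2 := psd_trsum_le pS.
have hK : pG eta rho * t <= Kc * t by apply: ler_wpM2r => //; apply: Kc_ge_pG.
have [u0|upos] := eqVneq (s + t) 0.
  have -> : t = 0 by lra.
  have -> : s = 0 by lra.
  rewrite u0 mul0r in h2.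
  have : c0 * complex.Re (\tr (\sum_i Mf i)) <= 0 by apply: mulr_ge0_le0.
  lra.
have upos' : 0 < s + t by rewrite lt_def upos /=; apply: addr_ge0.
set u := s + t in pS upos upos'.
set Mf' := fun i => RtoC u^-1 *: Mf i.
have hPS : PS (complex.Re (val Mf')).
  exists (1%:M - \sum_i Mf' i), Mf'; split; last by rewrite valE.
  split; last by move=> i; apply: MsZ => //; rewrite invr_ge0 ltW.
  split.
    have -> : 1%:M - \sum_i Mf' i = RtoC u^-1 *: (RtoC u *: 1%:M - \sum_i Mf i).
      rewrite scalerBr scalerA -RtoCM mulVf ?gt_eqF // RtoC1 scale1r.
      by rewrite scaler_sumr.
    by apply: psdZ => //; rewrite invr_ge0 ltW.
  split; first by move=> i; apply: psdZ; [rewrite invr_ge0 ltW | apply: pM].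
  by rewrite subrK.
have := pG_ub hPS; rewrite /Mf' valZ ReM_RtoC => h3.
have h4 : complex.Re (val Mf) <= u * pG eta rho.
  have := ler_wpM2l (ltW upos') h3.
  by rewrite mulrA mulfV ?gt_eqF // mul1r.
rewrite /u in h4; lra.
Qed.

Lemma phi_base_neg s : 0 <= s -> phi (RtoC (- s) *: 1%:M) <= - s * pG eta rho.
Proof.
move=> s0; apply: phi_le => r [Mf [t [MsM [t0 [pS ->]]]]].
rewrite herm_scal1 -scalerDl -RtoCD in pS.
have pM : forall i, psd (Mf i) by move=> i; apply: Ms_psd (MsM i).
have h1 := val_le pM; have h2 := psd_trsum_le pS.
have h0 : 0 <= complex.Re (\tr (\sum_i Mf i)).
  by apply/ge0_Re/tr_ge0/psd_sum.
have dpos : 0 < (d%:R : R) by rewrite ltr0n d_gt0.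
have ts : s <= t.
  have : 0 <= (- s + t) * d%:R by lra.
  by rewrite pmulr_lge0 // => h; lra.
have h3 : c0 * complex.Re (\tr (\sum_i Mf i)) <= c0 * ((- s + t) * d%:R).
  by apply: ler_wpM2l.
have h5 : 0 <= c0 * s * d%:R by rewrite mulr_ge0 // ?mulr_ge0 // ltW.
have h6 : pG eta rho * s <= pG eta rho * t by apply: ler_wpM2l => //; apply: pG_ge0.
rewrite /Kc; lra.
Qed.

Definition Idx := option ('I_d * 'I_d * bool).
Definition Tm (a : {ffun Idx -> R}) : M :=
  RtoC (a None) *: 1%:M +
  \matrix_(j, k) complex.Complex (a (Some (j, k, false))) (a (Some (j, k, true))).

Lemma RtoC_mulC (t x y : R) :
  RtoC t * complex.Complex x y = complex.Complex (t * x) (t * y).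
Proof. by rewrite /RtoC; simpc. Qed.

Lemma ReMC (a b : R) (z : C) :
  complex.Re (complex.Complex a b * z) = a * complex.Re z - b * complex.Im z.
Proof. by case: z => x y; simpc. Qed.

Lemma TmD a b : Tm (a + b) = Tm a + Tm b.
Proof.
rewrite /Tm ffunE RtoCD scalerDl addrACA; congr (_ + _).
by apply/matrixP => j k; rewrite !mxE !ffunE.
Qed.
Lemma TmZ t a : Tm (fsc t a) = RtoC t *: Tm a.
Proof.
rewrite /Tm scalerDr ffunE RtoCM scalerA; congr (_ + _).
by apply/matrixP => j k; rewrite !mxE !ffunE RtoC_mulC.
Qed.
Lemma Tm_e : Tm (fe R (None : Idx)) = 1%:M.
Proof.
rewrite /Tm ffunE eqxx RtoC1 scale1r.
have -> : \matrix_(j, k) complex.Complex (fe R (None : Idx) (Some (j, k, false)))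
     (fe R (None : Idx) (Some (j, k, true))) = 0 :> M.
  by apply/matrixP => j k; rewrite !mxE !ffunE.
by rewrite addr0.
Qed.

Definition pp (a : {ffun Idx -> R}) : R := - phi (- Tm a).

Lemma pp_add a b : pp (a + b) <= pp a + pp b.
Proof.
rewrite /pp TmD opprD; have := phi_superadd (- Tm a) (- Tm b).
move: (phi (- Tm a)) (phi (- Tm b)) (phi (- Tm a - Tm b)) => x y z; lra.
Qed.
Lemma pp_hom t a : 0 < t -> pp (fsc t a) = t * pp a.
Proof. by move=> tpos; rewrite /pp TmZ -scalerN phi_hom // mulrN. Qed.
Lemma pp_base t : t * pG eta rho <= pp (fsc t (fe R (None : Idx))).
Proof.
rewrite /pp TmZ Tm_e -scaleNr -RtoCN.
have [t0|t0] := leP 0 t.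
  have := phi_base_neg t0; move: (phi _) (pG eta rho) => x y; lra.
have s0 : 0 <= - t by rewrite oppr_ge0 ltW.
have := phi_base_pos s0; move: (phi _) (pG eta rho) => x y; lra.
Qed.

Section LamSec.
Variable lam : Idx -> R.
Hypothesis lam0 : lam None = pG eta rho.
Hypothesis lamP : forall a, flin lam a <= pp a.

Definition G : M :=
  \matrix_(k, j) complex.Complex (lam (Some (j, k, false))) (- lam (Some (j, k, true))).
Definition can (X : M) : {ffun Idx -> R} :=
  [ffun o => if o is Some (j, k, b) then
     (if b then complex.Im (X j k) else complex.Re (X j k)) else 0].

Lemma Tm_can X : Tm (can X) = X.
Proof.
rewrite /Tm ffunE RtoC0 scale0r add0r.
by apply/matrixP => j k; rewrite !mxE !ffunE /=; case: (X j k).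
Qed.

Definition ell (X : M) : R := complex.Re (\tr (G *m X)).

Lemma flin_can X : flin lam (can X) = ell X.
Proof.
rewrite /flin /ell big_optionS ffunE mulr0 add0r big_pairS big_pairS.
rewrite /mxtrace Re_sum exchange_big; apply: eq_bigr => k _.
rewrite mxE Re_sum; apply: eq_bigr => j _.
rewrite big_bool /= !ffunE mxE ReMC mulNr opprK addrC.
by [].
Qed.

Lemma ellN X : ell (- X) = - ell X.
Proof. by rewrite /ell mulmxN -ReN; congr complex.Re; exact: (raddfN (@mxtrace _ d)). Qed.

Lemma ell_ge_phi X : phi X <= ell X.
Proof.
have := lamP (can (- X)); rewrite flin_can /pp Tm_can opprK ellN.
move: (phi X) (ell X) => x y; lra.
Qed.

Lemma flin_fe : flin lam (fe R (None : Idx)) = lam None.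
Proof.
rewrite /flin big_optionS ffunE eqxx mulr1 big1 ?addr0 //.
by move=> p _; rewrite ffunE /= mulr0.
Qed.

Lemma ell1_le : ell 1%:M <= pG eta rho.
Proof.
have := lamP (can 1%:M + fsc (-1) (fe R (None : Idx))).
rewrite flinD flinZ flin_fe flin_can lam0 /pp TmD TmZ Tm_can Tm_e.
rewrite RtoCN RtoC1 scaleN1r subrr oppr0.
have := phi_psd (@psd0 _ d).
move: (phi 0) (ell 1%:M) (pG eta rho) => x y z; lra.
Qed.

Definition Hm : M := herm G.

Lemma ReH X : Defs.hermitian X -> complex.Re (\tr (Hm *m X)) = ell X.
Proof.
move=> hX; rewrite /Hm hermE -scalemxAl mxtraceZ ReM_RtoC mulmxDl mxtraceD ReD.
rewrite Re_tr_adj hX -/(ell X).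
move: (ell X) => e; lra.
Qed.

Lemma psd_rank1 (v : 'cV[C]_d) : psd (v *m adjmx v).
Proof.
split; first by rewrite /Defs.hermitian adjmx_mul adjmxK.
move=> w; rewrite !mulmxA -mulmxA mxE big_ord1.
have -> : (adjmx v *m w) 0 0 = Num.conj ((adjmx w *m v) 0 0).
  by rewrite -adjmxE adjmx_mul adjmxK.
exact: mul_conjC_ge0.
Qed.

Lemma mv_tr (A : M) (v : 'cV[C]_d) : mv A v = \tr (A *m (v *m adjmx v)).
Proof.
have -> : mv A v = \tr (adjmx v *m A *m v) by rewrite /mv /mxtrace big_ord1.
by rewrite [LHS]mxtrace_mulC [in LHS]mulmxA [LHS]mxtrace_mulC.
Qed.

Lemma Hm_psd : psd Hm.
Proof.
split; first exact: herm_herm.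
move=> v; apply: real_ge0C; first exact: herm_mv_real (herm_herm G).
have -> : (adjmx v *m Hm *m v) 0 0 = \tr (Hm *m (v *m adjmx v)).
  rewrite -/(mv Hm v); exact: mv_tr.
rewrite ReH; last exact: psd_herm (psd_rank1 v).
apply: le_trans (ell_ge_phi _); apply: phi_psd; exact: psd_rank1.
Qed.

Lemma Hm_Hset : Hset eta rho Hm.
Proof.
split; first exact: Hm_psd.
move=> i; split; first by apply: hermitianB; [exact: herm_herm | exact: herm_cc].
move=> F MsF.
have hF : Defs.hermitian F := psd_herm (Ms_psd MsF).
apply: real_ge0C.
  by apply: tr_herm_real => //; apply: hermitianB; [exact: herm_herm | exact: herm_cc].
rewrite mulmxBl trB ReB ReH //.
have := phi_single MsF; have := ell_ge_phi F.
move: (phi F) (ell F) (complex.Re (\tr (cc i *m F))) => x y z; lra.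
Qed.

Lemma Hm_tr : complex.Re (\tr Hm) <= pG eta rho.
Proof. by rewrite -(mulmx1 Hm) ReH; [exact: ell1_le | exact: hermitian1]. Qed.

End LamSec.

Lemma main_eq_sec : pG eta rho = qG eta rho.
Proof.
have [lam [lam0 lamP]] := hahn_banach pp_add pp_hom pp_base.
set H := Hm lam.
have HH : Hset eta rho H by apply: (@Hm_Hset lam); done.
have Htr : complex.Re (\tr H) <= pG eta rho by apply: (@Hm_tr lam); done.
set QS := [set r : R | exists H, Hset eta rho H /\ r = complex.Re (\tr H)]%classic.
have QSne : (QS !=set0)%classic by exists (complex.Re (\tr H)), H.
have lbQ : lbound QS (pG eta rho).
  move=> r [H' [HH' ->]]; apply: pG_le => r' hr'.
  exact: weak_duality HH' hr'.
have qE : qG eta rho = inf QS by [].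
apply/eqP; rewrite eq_le qE; apply/andP; split.
  exact: lb_le_inf.
apply: le_trans Htr; apply: ge_inf; first by exists (pG eta rho).
by exists H.
Qed.

End Main.


Theorem theorem2 (R : realType) (d n : nat)
    (eta : 'I_n -> R) (rho : 'I_n -> 'M[complex.complex R]_d) :
  ensemble eta rho -> pG eta rho = qG eta rho.
Proof.
move=> Hens; have [c0 [c0_ge0 c0_bd]] := c0_bound Hens.
exact: (main_eq_sec Hens c0_ge0 c0_bd).
Qed.
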